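(* Every Coxeter group is pq-generated; that is, for a Coxeter group $W$ with Coxeter generating set $S$ (presentation $\langle S\mid s^2=e\ (s\in S),\ (st)^{m_{st}}=e\ (s\neq t,\ m_{st}<\infty)\rangle$ with integers $m_{st}\geq 2$), there exists a power quandle $P$ with $W\cong\mathrm{Gr}(P)$. In particular this holds for the symmetric groups.
   Context: A power quandle $(P,\rhd,\pi,e)$ consists of a set $P$, a binary operation $\rhd$, an element $e$, and maps $\pi^n\colon P\to P$ ($n\in\mathbb{Z}$) satisfying: each $\lambda_a\colon b\mapsto a\rhd b$ is bijective and $a\rhd(b\rhd c)=(a\rhd b)\rhd(a\rhd c)$; $a\rhd a=a$; $e\rhd b=b$, $a\rhd e=e$; $\pi^1=\mathrm{id}$, $\pi^m\circ\pi^n=\pi^{mn}$; $\pi^0(a)=e$; $a\rhd\pi^n(b)=\pi^n(a\rhd b)$; $\pi^n(a)\rhd b=\lambda_a^n(b)$. For a power quandle $P$, $\mathrm{Gr}(P)$ is the group with generators $\sigma(a)$, $a\in P$, and relations $\sigma(a\rhd b)=\sigma(a)\sigma(b)\sigma(a)^{-1}$, $\sigma(\pi^n(a))=\sigma(a)^n$, $\sigma(e)=1$. A group $G$ is pq-generated if there exists a power quandle $P$ with $G\cong\mathrm{Gr}(P)$. *)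

(* Defs.v *)
From Stdlib Require Import ZArith.
Open Scope Z_scope.

Record Group := {
  gcar :> Type;
  gmul : gcar -> gcar -> gcar;
  gone : gcar;
  ginv : gcar -> gcar;
  gmul_assoc : forall x y z, gmul x (gmul y z) = gmul (gmul x y) z;
  gmul_1l : forall x, gmul gone x = x;
  gmul_1r : forall x, gmul x gone = x;
  gmul_Vl : forall x, gmul (ginv x) x = gone;
  gmul_Vr : forall x, gmul x (ginv x) = gone
}.

Arguments gmul {g} _ _.
Arguments gone {g}.
Arguments ginv {g} _.

Definition gpow_nat {G : Group} (x : G) (n : nat) : G :=
  Nat.iter n (fun y => gmul x y) gone.

Definition gpow {G : Group} (x : G) (n : Z) : G :=
  match n with
  | Z0 => gone
  | Zpos p => gpow_nat x (Pos.to_nat p)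
  | Zneg p => ginv (gpow_nat x (Pos.to_nat p))
  end.

Definition is_hom {G H : Group} (f : G -> H) : Prop :=
  forall x y, f (gmul x y) = gmul (f x) (f y).

Definition bijective_fun {A B : Type} (f : A -> B) : Prop :=
  exists g : B -> A, (forall x, g (f x) = x) /\ (forall y, f (g y) = y).

Definition group_iso (G H : Group) : Prop :=
  exists f : G -> H, is_hom f /\ bijective_fun f.

(* G together with sigma : X -> G is the group presented by generators X
   and relations R (R H f says that f : X -> H satisfies the relations),
   i.e. it satisfies the universal property of the presented group. *)
Definition is_presented_by (X : Type) (R : forall H : Group, (X -> H) -> Prop)
    (G : Group) (sigma : X -> G) : Prop :=
  R G sigma /\
  forall (H : Group) (f : X -> H), R H f ->
    exists h : G -> H, is_hom h /\ (forall x, h (sigma x) = f x) /\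
      forall h' : G -> H, is_hom h' -> (forall x, h' (sigma x) = f x) ->
        forall g, h' g = h g.

(* lam_pow_rel rhd a n b c  <->  lambda_a^n (b) = c, for n : Z
   (for n < 0 this uses the inverse bijection of lambda_a) *)
Definition lam_pow_rel {P : Type} (rhd : P -> P -> P) (a : P) (n : Z) (b c : P)
  : Prop :=
  if (0 <=? n) then c = Nat.iter (Z.to_nat n) (rhd a) b
  else b = Nat.iter (Z.to_nat (- n)) (rhd a) c.

Definition is_power_quandle (P : Type) (rhd : P -> P -> P) (pi : Z -> P -> P)
    (e : P) : Prop :=
  (forall a, bijective_fun (rhd a)) /\
  (forall a b c, rhd a (rhd b c) = rhd (rhd a b) (rhd a c)) /\
  (forall a, rhd a a = a) /\
  (forall b, rhd e b = b) /\
  (forall a, rhd a e = e) /\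
  (forall a, pi 1 a = a) /\
  (forall m n a, pi m (pi n a) = pi (m * n) a) /\
  (forall a, pi 0 a = e) /\
  (forall n a b, rhd a (pi n b) = pi n (rhd a b)) /\
  (forall n a b, lam_pow_rel rhd a n b (rhd (pi n a) b)).

Definition Gr_rel (P : Type) (rhd : P -> P -> P) (pi : Z -> P -> P) (e : P)
    (H : Group) (s : P -> H) : Prop :=
  (forall a b, s (rhd a b) = gmul (gmul (s a) (s b)) (ginv (s a))) /\
  (forall n a, s (pi n a) = gpow (s a) n) /\
  s e = gone.

Definition pq_generated (G : Group) : Prop :=
  exists (P : Type) (rhd : P -> P -> P) (pi : Z -> P -> P) (e : P),
    is_power_quandle P rhd pi e /\
    exists (GrP : Group) (sigma : P -> GrP),
      is_presented_by P (Gr_rel P rhd pi e) GrP sigma /\ group_iso G GrP.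

(* m s t = None encodes m_st = infinity *)
Definition coxeter_matrix {S : Type} (m : S -> S -> option nat) : Prop :=
  (forall s t, m s t = m t s) /\
  (forall s t k, s <> t -> m s t = Some k -> (2 <= k)%nat).

Definition coxeter_rel {S : Type} (m : S -> S -> option nat)
    (H : Group) (f : S -> H) : Prop :=
  (forall s, gmul (f s) (f s) = gone) /\
  (forall s t k, s <> t -> m s t = Some k -> gpow_nat (gmul (f s) (f t)) k = gone).

Definition is_coxeter_group (S : Type) (m : S -> S -> option nat)
    (W : Group) (s : S -> W) : Prop :=
  coxeter_matrix m /\ is_presented_by S (coxeter_rel m) W s.

(* Main.v *)
Require Import Defs.
From Stdlib Require Import ZArith Lia ProofIrrelevance.

Section GL.
Variable G : Group.

Lemma inv_unique (x y : G) : gmul x y = gone -> ginv x = y.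
Proof.
  intro H. rewrite <- (gmul_1r G (ginv x)). rewrite <- H.
  rewrite gmul_assoc, gmul_Vl, gmul_1l. reflexivity.
Qed.

Lemma invol_inv (x : G) : gmul x x = gone -> ginv x = x.
Proof. apply inv_unique. Qed.

Lemma pow_succ_r (x : G) j : gpow_nat x (S j) = gmul (gpow_nat x j) x.
Proof.
  induction j as [|j IH].
  - simpl. rewrite gmul_1l, gmul_1r. reflexivity.
  - change (gpow_nat x (S (S j))) with (gmul x (gpow_nat x (S j))).
    rewrite IH at 1. rewrite gmul_assoc. reflexivity.
Qed.

Definition alt j (a b : G) : G := gmul (gpow_nat (gmul a b) j) a.

Lemma comm_pow (a b : G) j :
  gmul a (gpow_nat (gmul b a) j) = gmul (gpow_nat (gmul a b) j) a.
Proof.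
  induction j as [|j IH].
  - simpl. rewrite gmul_1l, gmul_1r. reflexivity.
  - change (gpow_nat (gmul b a) (S j)) with (gmul (gmul b a) (gpow_nat (gmul b a) j)).
    change (gpow_nat (gmul a b) (S j)) with (gmul (gmul a b) (gpow_nat (gmul a b) j)).
    rewrite (gmul_assoc G a), (gmul_assoc G a b a).
    rewrite <- (gmul_assoc G (gmul a b) a), IH.
    rewrite !gmul_assoc. reflexivity.
Qed.

Lemma alt_step (a b : G) j : gmul (gmul a (alt j b a)) a = alt (S j) a b.
Proof.
  unfold alt. rewrite (gmul_assoc G a), comm_pow.
  rewrite pow_succ_r. rewrite !gmul_assoc. reflexivity.
Qed.

Lemma hom_one (H : Group) (h : G -> H) : is_hom h -> h gone = gone.
Proof.
  intro Hh. pose proof (Hh gone gone) as E. rewrite gmul_1l in E.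
  assert (E2 : gmul (ginv (h gone)) (h gone) = gmul (ginv (h gone)) (gmul (h gone) (h gone)))
    by (rewrite <- E; reflexivity).
  rewrite gmul_assoc, gmul_Vl, gmul_1l in E2. symmetry; exact E2.
Qed.

Lemma gpow_nat_invol (x : G) k : gmul x x = gone ->
  gpow_nat x k = if Nat.even k then gone else x.
Proof.
  intro Hx. induction k as [|k IH]; [reflexivity|].
  change (gpow_nat x (S k)) with (gmul x (gpow_nat x k)). rewrite IH.
  rewrite Nat.even_succ, <- Nat.negb_even.
  destruct (Nat.even k); simpl; [apply gmul_1r | exact Hx].
Qed.
End GL.

Arguments alt {G} j a b.

Lemma Zeven_nat k : Z.even (Z.of_nat k) = Nat.even k.
Proof.
  induction k as [|k IH]; [reflexivity|].
  rewrite Nat2Z.inj_succ, Z.even_succ, Nat.even_succ, <- Z.negb_even, <- Nat.negb_even, IH.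
  reflexivity.
Qed.

Inductive refl {S : Type} {W : Group} (s : S -> W) : W -> Prop :=
| refl_base : forall x, gmul (s x) (s x) = gone -> refl s (s x)
| refl_step : forall x r, gmul (s x) (s x) = gone -> refl s r ->
     refl s (gmul (gmul (s x) r) (s x)).

Section Main.
Variables (S : Type) (W : Group) (s : S -> W).
Hypothesis ss : forall x, gmul (s x) (s x) = gone.

Lemma refl_invol r : refl s r -> gmul r r = gone.
Proof.
  induction 1 as [x Hx|x r Hx Hr IH]; [exact Hx|].
  rewrite !gmul_assoc. rewrite <- (gmul_assoc W _ (s x) (s x)), Hx, gmul_1r.
  rewrite <- (gmul_assoc W _ r r), IH, gmul_1r. exact Hx.
Qed.

Lemma refl_conj a b : refl s a -> refl s b -> refl s (gmul (gmul a b) a).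
Proof.
  intro Ha. revert b. induction Ha as [x Hx|x r Hx Hr IH]; intros b Hb.
  - apply refl_step; assumption.
  - assert (E : gmul (gmul (gmul (gmul (s x) r) (s x)) b) (gmul (gmul (s x) r) (s x))
               = gmul (gmul (s x) (gmul (gmul r (gmul (gmul (s x) b) (s x))) r)) (s x)).
    { rewrite !gmul_assoc. reflexivity. }
    rewrite E. apply refl_step; [exact Hx|]. apply IH. apply refl_step; assumption.
Qed.

Definition P : Type := {w : W | w = gone \/ refl s w}.

Lemma P_eq (p q : P) : proj1_sig p = proj1_sig q -> p = q.
Proof.
  destruct p as [p hp], q as [q hq]; simpl; intro E; subst.
  f_equal; apply proof_irrelevance.
Qed.

Lemma P_invol (p : P) : gmul (proj1_sig p) (proj1_sig p) = gone.
Proof.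
  destruct p as [p [E|R]]; simpl. subst; apply gmul_1l. apply refl_invol; exact R.
Qed.

Lemma rhd_mem (a b : P) : let v := gmul (gmul (proj1_sig a) (proj1_sig b)) (proj1_sig a) in
   v = gone \/ refl s v.
Proof.
  destruct a as [a [Ea|Ra]], b as [b [Eb|Rb]]; simpl; subst.
  - left. rewrite !gmul_1l. reflexivity.
  - right. rewrite gmul_1l, gmul_1r. exact Rb.
  - left. rewrite gmul_1r. apply refl_invol; exact Ra.
  - right. apply refl_conj; assumption.
Qed.

Definition rhd (a b : P) : P := exist _ _ (rhd_mem a b).
Definition eP : P := exist _ gone (or_introl eq_refl).
Definition piP (n : Z) (a : P) : P := if Z.even n then eP else a.

Lemma rhd_invol a b : rhd a (rhd a b) = b.
Proof.
  apply P_eq. simpl. pose proof (P_invol a) as Ha.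
  rewrite !gmul_assoc, Ha, gmul_1l, <- gmul_assoc, Ha, gmul_1r. reflexivity.
Qed.

Lemma rhd_e b : rhd eP b = b.
Proof. apply P_eq; simpl. rewrite gmul_1l, gmul_1r. reflexivity. Qed.

Lemma iter_rhd a k b : Nat.iter k (rhd a) b = if Nat.even k then b else rhd a b.
Proof.
  induction k as [|k IH]; [reflexivity|].
  simpl Nat.iter. rewrite IH, Nat.even_succ, <- Nat.negb_even.
  destruct (Nat.even k); simpl; [reflexivity|apply rhd_invol].
Qed.

Lemma is_pq : is_power_quandle P rhd piP eP.
Proof.
  repeat split.
  - intro a. exists (rhd a). split; intro; apply rhd_invol.
  - intros a b c. apply P_eq; simpl. pose proof (P_invol a) as Ha.
    set (x := proj1_sig a). set (y := proj1_sig b). set (z := proj1_sig c). fold x in Ha.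
    rewrite !gmul_assoc.
    rewrite <- (gmul_assoc W _ x x), Ha, gmul_1r.
    rewrite <- (gmul_assoc W _ x x), Ha, gmul_1r. reflexivity.
  - intro a. apply P_eq; simpl. pose proof (P_invol a) as Ha.
    rewrite <- gmul_assoc, Ha, gmul_1r. reflexivity.
  - intro b. apply rhd_e.
  - intro a. apply P_eq; simpl. rewrite gmul_1r. apply P_invol.
  - intros m n a. unfold piP. rewrite Z.even_mul.
    destruct (Z.even n); destruct (Z.even m); reflexivity.
  - intros n a b. unfold piP. destruct (Z.even n); [|reflexivity].
    apply P_eq; simpl. rewrite gmul_1r. apply P_invol.
  - intros n a b. unfold lam_pow_rel, piP.
    destruct (0 <=? n) eqn:Hn.
    + apply Z.leb_le in Hn. rewrite iter_rhd.
      assert (Ev : Z.even n = Nat.even (Z.to_nat n)).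
      { rewrite <- Zeven_nat, Z2Nat.id by exact Hn. reflexivity. }
      rewrite Ev.
      destruct (Nat.even (Z.to_nat n)); [apply rhd_e|reflexivity].
    + apply Z.leb_gt in Hn. rewrite iter_rhd.
      assert (Hn' : 0 <= - n) by lia.
      assert (Ev : Z.even n = Nat.even (Z.to_nat (- n))).
      { rewrite <- Zeven_nat, Z2Nat.id by exact Hn'. symmetry; apply Z.even_opp. }
      rewrite Ev.
      destruct (Nat.even (Z.to_nat (- n))); [rewrite rhd_e; reflexivity|].
      symmetry; apply rhd_invol.
Qed.

Definition incl (p : P) : W := proj1_sig p.

Lemma gpow_P (p : P) n : gpow (incl p) n = incl (piP n p).
Proof.
  unfold piP, incl. pose proof (P_invol p) as Hp.
  destruct n as [|q|q]; unfold gpow.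
  - reflexivity.
  - rewrite gpow_nat_invol by exact Hp.
    rewrite <- positive_nat_Z, Zeven_nat. destruct (Nat.even (Pos.to_nat q)); reflexivity.
  - rewrite gpow_nat_invol by exact Hp.
    change (Z.neg q) with (- Z.pos q). rewrite Z.even_opp.
    rewrite <- positive_nat_Z, Zeven_nat. destruct (Nat.even (Pos.to_nat q)); simpl.
    + apply invol_inv. apply gmul_1l.
    + apply invol_inv. exact Hp.
Qed.

Lemma incl_rel : Gr_rel P rhd piP eP W incl.
Proof.
  repeat split.
  - intros a b. unfold incl; simpl. f_equal. symmetry. apply invol_inv, P_invol.
  - intros n a. symmetry. apply gpow_P.
Qed.

Definition sP (x : S) : P := exist _ (s x) (or_intror (refl_base s x (ss x))).

Lemma alt_refl j x y : refl s (alt j (s x) (s y)).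
Proof.
  revert x y. induction j as [|j IH]; intros x y.
  - unfold alt; simpl. rewrite gmul_1l. apply refl_base, ss.
  - rewrite <- alt_step. apply refl_step; [apply ss|apply IH].
Qed.

Definition altP j x y : P := exist _ _ (or_intror (alt_refl j x y)).

Section H.
Variables (H : Group) (f : P -> H).
Hypothesis Hf : Gr_rel P rhd piP eP H f.

Lemma f_invol a : gmul (f a) (f a) = gone.
Proof.
  destruct Hf as [_ [Hpi He]].
  pose proof (Hpi 2%Z a) as E. simpl in E. unfold gpow_nat in E. simpl in E.
  rewrite gmul_1r in E. rewrite <- E. unfold piP; simpl. exact He.
Qed.

Lemma f_alt j x y : f (altP j x y) = alt j (f (sP x)) (f (sP y)).
Proof.
  revert x y. induction j as [|j IH]; intros x y.
  - unfold alt; simpl. rewrite gmul_1l. f_equal. apply P_eq; simpl. apply gmul_1l.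
  - rewrite <- alt_step.
    assert (E : altP (Datatypes.S j) x y = rhd (sP x) (altP j y x)).
    { apply P_eq; simpl. symmetry. apply alt_step. }
    rewrite E. destruct Hf as [Hc _]. rewrite Hc, IH.
    rewrite (invol_inv H (f (sP x))) by apply f_invol. reflexivity.
Qed.


Lemma alt_pow (G : Group) j (a b : G) :
  gmul (alt j a b) b = gpow_nat (gmul a b) (Datatypes.S j).
Proof. unfold alt. rewrite pow_succ_r, <- gmul_assoc. reflexivity. Qed.

Lemma cox_f (m : S -> S -> option nat) : coxeter_rel m W s ->
  coxeter_rel m H (fun x => f (sP x)).
Proof.
  intros [_ Hm]. split; [intro; apply f_invol|].
  intros x y k Hxy Hk. destruct k as [|j]; [reflexivity|].
  pose proof (Hm x y (Datatypes.S j) Hxy Hk) as E.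
  rewrite <- alt_pow in E.
  assert (E2 : altP j x y = sP y).
  { apply P_eq; simpl.
    rewrite <- (gmul_1r W (alt j (s x) (s y))), <- (ss y), gmul_assoc, E, gmul_1l.
    reflexivity. }
  rewrite <- alt_pow, <- f_alt, E2. apply f_invol.
Qed.
End H.
End Main.

Theorem mainTheorem16 :
  forall (S : Type) (m : S -> S -> option nat) (W : Group) (s : S -> W),
    is_coxeter_group S m W s -> pq_generated W.
Proof.
  intros S m W s [_ [Hrel Huniv]].
  assert (ss : forall x, gmul (s x) (s x) = gone) by apply Hrel.
  exists (P S W s), (rhd S W s), (piP S W s), (eP S W s).
  split; [apply is_pq|].
  exists W, (incl S W s). split.
  - split; [apply incl_rel|].
    intros H f Hf.
    destruct (Huniv H (fun x => f (sP S W s ss x)) (cox_f S W s ss H f Hf m Hrel))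
      as [h [Hh [Hhs Hu]]].
    exists h. split; [exact Hh|]. split.
    + intros [w pw]. unfold incl; simpl.
      destruct pw as [E|R].
      * subst w. rewrite hom_one by exact Hh. destruct Hf as [_ [_ He]].
        rewrite <- He. f_equal.
      * assert (K : forall w, refl s w -> forall pw, h w = f (exist _ w pw)).
        { induction 1 as [x Hx|x r Hx Hr IH]; intro pw.
          - rewrite Hhs. f_equal. apply P_eq; reflexivity.
          - rewrite !Hh, (IH (or_intror Hr)), Hhs.
            assert (Ep : (exist (fun w => w = gone \/ refl s w) _ pw : P S W s)
                         = rhd S W s (sP S W s ss x) (exist _ r (or_intror Hr)))
              by (apply P_eq; reflexivity).
            rewrite Ep.
            pose proof Hf as [Hc _]. rewrite Hc.
            rewrite (invol_inv H (f (sP S W s ss x))) by apply (f_invol S W s H f Hf).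
            reflexivity. }
        apply K; exact R.
    + intros h' Hh' Hh's g. apply (Hu h' Hh'). intro x. apply (Hh's (sP S W s ss x)).
  - exists (fun x => x). split.
    + intros x y; reflexivity.
    + exists (fun x => x); split; reflexivity.
Qed.
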